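(* Let $n\geqslant 2$ and let $\alpha\colon\mathbb{N}^n\to\mathbb{N}^n$ be an isometry of $\mathbb{N}^n$ onto itself such that $(\mathbf{2}_i)\alpha=\mathbf{2}_i$ for all $i=1,\ldots,n$. Then $\alpha$ is the identity map of $\mathbb{N}^n$.
   Context: $\mathbb{N}=\{1,2,3,\ldots\}$ and $\mathbb{N}^n$ carries the Euclidean metric. Maps are written on the right. For $i\in\{1,\ldots,n\}$, $\mathbf{2}_i$ is the point of $\mathbb{N}^n$ whose $i$-th coordinate is $2$ and all other coordinates equal $1$. *)

(* Defs.v *)
From mathcomp Require Import all_boot.
Set Implicit Arguments. Unset Strict Implicit. Unset Printing Implicit Defensive.

(* Points of Z^n-like space: functions 'I_n -> nat (coordinate i is x i);
   the subset N^n (coordinates in {1,2,...}) is carved out by [inNn]. *)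
Definition pt (n : nat) := {ffun 'I_n -> nat}.

Definition inNn (n : nat) (x : pt n) : Prop := forall i : 'I_n, 0 < x i.

Definition absdiff (a b : nat) : nat := (a - b) + (b - a).

Definition sqdist (n : nat) (x y : pt n) : nat :=
  \sum_(i < n) (absdiff (x i) (y i)) ^ 2.

Definition two (n : nat) (i : 'I_n) : pt n :=
  [ffun j => if j == i then 2 else 1].

Definition isometry_onto (n : nat) (alpha : pt n -> pt n) : Prop :=
  (forall x, inNn x -> inNn (alpha x)) /\
  (forall y, inNn y -> exists x, inNn x /\ alpha x = y) /\
  (forall x y, inNn x -> inNn y -> sqdist (alpha x) (alpha y) = sqdist x y).

(* Main.v *)
Require Import Defs.
From mathcomp Require Import all_boot.
From mathcomp Require Import zify.
Set Implicit Arguments. Unset Strict Implicit.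

Definition one (n : nat) : pt n := [ffun => 1].

Lemma sq_id a : 0 < a -> absdiff a 2 ^ 2 + 2 * a = absdiff a 1 ^ 2 + 3.
Proof.
rewrite /absdiff => ha.
case: a ha => [//|[|a]] _; first by [].
have -> : a.+2 - 2 = a by lia.
have -> : a.+2 - 1 = a.+1 by lia.
have -> : 2 - a.+2 = 0 by lia.
have -> : 1 - a.+2 = 0 by lia.
nia.
Qed.

Lemma ident n (x : pt n) (i : 'I_n) : inNn x ->
  sqdist x (two i) + 2 * x i = sqdist x (one n) + 3.
Proof.
move=> hx; rewrite /sqdist (bigD1 i) //= (bigD1 i (P := predT)) //=.
rewrite !ffunE eqxx.
have -> : \sum_(j < n | j != i) absdiff (x j) (two i j) ^ 2 =
          \sum_(j < n | j != i) absdiff (x j) (one n j) ^ 2.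
  by apply: eq_bigr => j /negbTE hj; rewrite !ffunE hj.
by rewrite addnAC (sq_id (hx i)) addnAC.
Qed.

Lemma absdiffC a b : absdiff a b = absdiff b a.
Proof. by rewrite /absdiff addnC. Qed.

Lemma sqdistC n (x y : pt n) : sqdist x y = sqdist y x.
Proof. by apply: eq_bigr => i _; rewrite absdiffC. Qed.

Lemma key n (x y : pt n) : inNn x -> inNn y ->
  sqdist x (one n) = sqdist y (one n) ->
  (forall i, sqdist x (two i) = sqdist y (two i)) -> x = y.
Proof.
move=> hx hy h1 h2; apply/ffunP => i.
have e1 := ident i hx; have e2 := ident i hy; rewrite h1 h2 -e2 in e1.
move/addnI: e1 => e1.
apply/eqP; rewrite -(eqn_pmul2l (isT : 0 < 2)); apply/eqP; exact: e1.
Qed.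

Lemma lemA n (y : pt n) : 2 <= n -> inNn y ->
  (forall i, sqdist y (two i) = 1) -> y = one n \/ (n = 2 /\ forall i, y i = 2).
Proof.
move=> hn hy h.
have hc : forall i, 2 * y i = sqdist y (one n) + 2.
  by move=> i; have := ident i hy; rewrite h; lia.
have i0 : 'I_n by exists 0; lia.
set c := y i0.
have hyc : forall i, y i = c by move=> i; have := hc i; have := hc i0; lia.
have hD : sqdist y (one n) = n * (c - 1) ^ 2.
  rewrite /sqdist (eq_bigr (fun _ => (c - 1) ^ 2)).
    by rewrite sum_nat_const card_ord.
  move=> i _; rewrite hyc ffunE /absdiff.
  have := hy i0; rewrite -/c => hc0.
  have -> : 1 - c = 0 by lia.
  by rewrite addn0.
have := hc i0; rewrite hD -/c => e.
have hc0 := hy i0; rewrite -/c in hc0.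
have [d hd] : exists d, c = d.+1 by exists c.-1; lia.
rewrite hd subSS subn0 in e.
case: d hd e => [|d] hd e.
  left; apply/ffunP => i; by rewrite hyc ffunE hd.
case: d hd e => [|d] hd e.
  right; split; first nia.
  by move=> i; rewrite hyc hd.
exfalso; nia.
Qed.

Theorem corollary3p1 (n : nat) (alpha : pt n -> pt n) :
  2 <= n ->
  isometry_onto alpha ->
  (forall i : 'I_n, alpha (two i) = two i) ->
  forall x : pt n, inNn x -> alpha x = x.
Proof.
move=> hn [hin [hsur hiso]] hfix.
have two_in : forall i : 'I_n, inNn (two i).
  by move=> i j; rewrite ffunE; case: (j == i).
have one_in : inNn (one n) by move=> j; rewrite ffunE.
have d1 : forall i : 'I_n, sqdist (one n) (two i) = 1.
  move=> i; rewrite /sqdist (bigD1 i) //= big1 => [|j hj].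
    by rewrite !ffunE eqxx.
  by rewrite !ffunE (negbTE hj).
suff h1 : alpha (one n) = one n.
  move=> x hx; apply: key => //; first exact: hin.
    by rewrite -{1}h1 hiso.
  by move=> i; rewrite -{1}hfix hiso.
have hA : forall z, inNn z -> alpha z = one n ->
    z = one n \/ (n = 2 /\ forall i, z i = 2).
  move=> z hz hzo; apply: lemA => // i.
  by rewrite -hiso // hzo hfix.
have [z [hz hzo]] := hsur _ one_in.
case: (hA z hz hzo) => [hz1|[n2 hzi]]; first by rewrite -{1}hz1.
have hy : inNn (alpha (one n)) by apply: hin.
have [->//|[_ hyi]] := lemA hn hy (fun i => ltac:(rewrite -(hfix i) hiso //; exact: d1)).
exfalso.
subst n.
set p : pt 2 := [ffun j => if j == ord0 then 3 else 1].
have hp : inNn p by move=> j; rewrite ffunE; case: (j == ord0).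
have hw := hin _ hp.
set w := alpha p in hw.
have e1 : sqdist w (one 2) = 2.
  rewrite -hzo hiso // /sqdist !big_ord_recr big_ord0 /= !ffunE !hzi /=.
  by [].
have e2 : sqdist w (two ord_max) = 5.
  rewrite -hfix hiso // /sqdist !big_ord_recr big_ord0 /= !ffunE /=.
  by [].
have := ident ord_max hw; rewrite e1 e2.
have := hw ord_max; lia.
Qed.
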